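(* Let $L\ge1$, $k\ge2$ be integers with $k\mid L$, let $r$ be a positive integer, $p$ a positive integer, $l_j=(j-1)\frac Lk+1$ for $j=1,\dots,k$ and $l_{k+1}=2L$. Let $u\in\{1,\dots,k-1\}$, let $m_u$ be an $(l_{u+1}+2-l_u)$-bit string and $m'_{u+1}$ a $(2L+p+2-l_{u+1})$-bit string, and suppose that for some $s_0\in\{0,1,\dots,r-1\}$, $$\Big|m'_{u+1}-\big(\tfrac{s_0}{r}\big)_{\{l_{u+1},2L+1+p\}}\Big|<2^p,\qquad (m'_{u+1})_{[1,2]}=\big(\tfrac{s_0}{r}\big)_{\{l_{u+1},l_{u+1}+1\}},$$ and $$d_{l_{u+1}+2-l_u}\Big(m_u,\big(\tfrac{s_0}{r}\big)_{\{l_u,l_{u+1}+1\}}\Big)\le 1.$$ Then there exists $c_u\in\{-1,0,1\}$ such that (the integer formed by the last two bits of $m_u$)$+c_u\equiv (m'_{u+1})_{[1,2]}\pmod 4$, and for any such $c_u$, letting $prefix_u=(m_u+c_u)\bmod 2^{l_{u+1}+2-l_u}$ (as an $(l_{u+1}+2-l_u)$-bit string) and $m'_u=prefix_u\circ(m'_{u+1})_{[3,\,2L+p+2-l_{u+1}]}$, we have $$\Big|m'_u-\big(\tfrac{s_0}{r}\big)_{\{l_u,2L+1+p\}}\Big|<2^p\quad\text{and}\quad (m'_u)_{[1,2]}=\big(\tfrac{s_0}{r}\big)_{\{l_u,l_u+1\}}.$$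
   Context: Bit strings are identified with the binary integers they represent (most significant bit first); $\circ$ denotes concatenation of bit strings. For a bit string $x=x_1\cdots x_n$, $x_{[i,j]}=x_i\cdots x_j$. For real $\omega$ with binary fractional expansion $0.b_1b_2\cdots$ (not ending in infinitely many 1's), $\omega_{\{i,j\}}=b_i\cdots b_j$. For two $t$-bit strings $x,y$, $d_t(x,y)=\min(|x-y|,2^t-|x-y|)$. The construction of $m'_u$ from $m_u$ and $m'_{u+1}$ is one step of the classical correction procedure CombineResults. *)

(* Defs.v *)
(* Bit strings are natural numbers together with a length. *)
From mathcomp Require Import all_boot all_order all_algebra.
Set Implicit Arguments. Unset Strict Implicit. Unset Printing Implicit Defensive.
Import Order.TTheory GRing.Theory Num.Theory.

(* x_{[i,j]} for an n-bit string x (bits numbered 1..n, MSB first). *)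
Definition bits_sub (n x i j : nat) : nat := (x %/ 2 ^ (n - j)) %% 2 ^ (j - i + 1).

(* omega_{i,j} for omega = s / r in [0,1): bits b_i..b_j of the binary
   expansion (the non-terminating-in-1s expansion, i.e. floor). *)
Definition frac_bits (s r i j : nat) : nat := (s * 2 ^ j %/ r) %% 2 ^ (j - i + 1).

Definition concat_bits (x y m : nat) : nat := x * 2 ^ m + y.

Definition dist_t (t x y : nat) : nat := minn `|x - y|%N (2 ^ t - `|x - y|%N).

Definition lpos (L k j : nat) : nat :=
  if j == k.+1 then 2 * L else (j - 1) * (L %/ k) + 1.

(* Main.v *)
Require Import Defs.
From mathcomp Require Import all_boot all_order all_algebra zify.
Import Order.TTheory GRing.Theory Num.Theory.
Local Open Scope ring_scope.

Lemma dist_cases (m t P : nat) : (m < P)%N -> (t < P)%N -> (minn `|m%:Z - t%:Z|%N (P - `|m%:Z - t%:Z|%N) <= 1)%N -> (m = t \/ m = t.+1 \/ t = m.+1 \/ m + 1 = t + P \/ t + 1 = m + P)%N.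
Proof.
move=> h1 h2. case: (leqP m t) => h.
 rewrite distnEr // geq_min. case/orP=> h3; lia.
 rewrite distnEl ?(ltnW h) // geq_min. case/orP=> h3; lia.
Qed.

Lemma modMsplit (X Q P : nat) : (0 < Q)%N -> (0 < P)%N ->
  (X %% (P * Q) = (X %/ Q %% P) * Q + X %% Q)%N.
Proof.
move=> hQ hP.
have e : (X = (X %/ Q %/ P) * (P * Q) + ((X %/ Q %% P) * Q + X %% Q))%N.
  rewrite {1}(divn_eq X Q) {1}(divn_eq (X %/ Q) P). lia.
rewrite {1}e modnMDl modn_small //.
have h1 : (X %/ Q %% P < P)%N by rewrite ltn_pmod.
have h2 : (X %% Q < Q)%N by rewrite ltn_pmod.
nia.
Qed.

Lemma inlist (c : int) : c \in [:: -1; 0; 1] -> c = -1 \/ c = 0 \/ c = 1.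
Proof. rewrite !inE => /or3P [/eqP->|/eqP->|/eqP->]; tauto. Qed.

Lemma modz4E (x y : int) : (x = y %[mod 4])%Z -> exists k : int, x = y + k * 4.
Proof. move/eqP; rewrite eqz_mod_dvd => /dvdzP [k hk]; exists k; rewrite -hk; lia. Qed.
Lemma modz4I (x y k : int) : x = y + k * 4 -> (x = y %[mod 4])%Z.
Proof. move=> ->; by rewrite addrC modzMDl. Qed.
Lemma pure (h n p X mu mu' : nat) :
 (mu < 2^(h+2))%N -> (mu' < 2^(n+2))%N ->
 `|mu'%:Z - (X %% 2^(n+2))%:Z| < (2^p)%:Z ->
 (mu' %/ 2^n %% 4 = X %/ 2^n %% 4)%N ->
 (minn `|mu%:Z - (X %/ 2^n %% 2^(h+2))%:Z|%N (2^(h+2) - `|mu%:Z - (X %/ 2^n %% 2^(h+2))%:Z|%N) <= 1)%N ->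
 (exists c : int, c \in [:: -1; 0; 1] /\ ((mu %% 4)%:Z + c = (mu' %/ 2^n %% 4)%:Z %[mod 4])%Z) /\
 forall c : int, c \in [:: -1; 0; 1] -> ((mu %% 4)%:Z + c = (mu' %/ 2^n %% 4)%:Z %[mod 4])%Z ->
   let prefix := `|((mu%:Z + c) %% (2^(h+2))%:Z)%Z|%N in
   let mu'u := (prefix * 2^n + mu' %% 2^n)%N in
   `|mu'u%:Z - (X %% 2^(h+n+2))%:Z| < (2^p)%:Z /\ (mu'u %/ 2^(h+n) %% 4 = X %/ 2^(n+h) %% 4)%N.
Proof.
set P := (2^(h+2))%N. set Q := (2^n)%N. set Y := (X %/ Q)%N. set t := (Y %% P)%N.
move=> hmu hmu' hd htop hdist.
have hQ : (0 < Q)%N by rewrite expn_gt0.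
have hP : (0 < P)%N by rewrite expn_gt0.
have P4 : P = (2^h * 4)%N by rewrite /P expnD.
have tP : (t < P)%N by rewrite ltn_pmod.
have t4 : (t %% 4 = Y %% 4)%N by rewrite /t modn_dvdm // P4 dvdn_mull.
have [d [hdl [q hq]]] : exists d : int, (d = -1 \/ d = 0 \/ d = 1) /\ exists q : int, mu%:Z + d = t%:Z + q * (2^h)%:Z * 4.
  have PZ : (P%:Z = (2^h)%:Z * 4) by rewrite P4 PoszM.
  case: (@dist_cases mu t P hmu tP hdist) => [e|[e|[e|[e|e]]]].
  - exists 0; split; [tauto| exists 0; lia].
  - exists (-1); split; [tauto| exists 0; lia].
  - exists 1; split; [tauto| exists 0; lia].
  - exists 1; split; [tauto| exists 1; lia].
  - exists (-1); split; [tauto| exists (-1); lia].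
have m4 : (mu' %/ Q %% 4 = t %% 4)%N by rewrite t4.
split.
  exists d; split.
    by case: hdl => [->|[->|->]].
  have [w hw] : exists w : int, mu%:Z + d = t%:Z + w * 4 by exists (q * (2^h)%:Z).
  rewrite m4; apply: (@modz4I _ _ (w - (mu %/ 4)%N%:Z + (t%/4)%N%:Z)).
  have h1 := divn_eq mu 4. have h2 := divn_eq t 4. clear -hw h1 h2. lia.
move=> c /inlist hc hcong.
have [w hw] : exists w : int, mu%:Z + d = t%:Z + w * 4 by exists (q * (2^h)%:Z).
have cd : c = d.
  move: hcong; rewrite m4 => /modz4E [k hk].
  have h1 := divn_eq mu 4. have h2 := divn_eq t 4.
  have : c - d = (k - w - (t %/ 4)%N%:Z + (mu %/ 4)%N%:Z) * 4 by clear -hk hw h1 h2; lia.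
  clear -hc hdl.
  by case: hc => [->|[->|->]]; case: hdl => [->|[->|->]]; lia.
subst c.
have -> : `|((mu%:Z + d) %% P%:Z)%Z|%N = t.
  have PZ : (P%:Z = (2^h)%:Z * 4) by rewrite P4 PoszM.
  have -> : mu%:Z + d = q * P%:Z + t%:Z by rewrite PZ; lia.
  by rewrite modzMDl modz_nat modn_small.
move=> pre mu'u; rewrite /mu'u /pre {pre mu'u}.
have eX : (X %% 2^(h+n+2) = t * Q + X %% Q)%N.
  have -> : (2^(h+n+2) = P * Q)%N by rewrite /P /Q -expnD; congr (2 ^ _)%N; lia.
  by rewrite modMsplit.
have e4 : (2^(n+2) = 4 * Q)%N by rewrite /Q expnD mulnC.
have eX2 : (X %% 2^(n+2) = (Y %% 4) * Q + X %% Q)%N.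
  by rewrite e4 modMsplit.
have emu' : (mu' = (Y %% 4) * Q + mu' %% Q)%N.
  have hlt : (mu' %/ Q < 4)%N by rewrite ltn_divLR // -e4.
  rewrite -htop modn_small //; exact: divn_eq.
split.
  rewrite eX; move: hd; rewrite eX2.
  have -> : ((t * Q + mu' %% Q)%N%:Z - (t * Q + X %% Q)%N%:Z) = (mu'%:Z - ((Y %% 4) * Q + X %% Q)%N%:Z).
    rewrite {2}emu'. clear. rewrite !PoszD. lia.
  by [].
have e1 : (2^(h+n) = Q * 2^h)%N by rewrite /Q expnD mulnC.
have e2 : (2^(n+h) = Q * 2^h)%N by rewrite /Q expnD.
rewrite e1 e2 !divnMA divnMDl // [((mu' %% Q) %/ Q)%N]divn_small ?ltn_pmod // addn0.
rewrite /t P4 mulnC -modn_divl modn_mod //.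
Qed.

Lemma Fshift (s0 r j E : nat) : (0 < r)%N -> (j <= E)%N ->
  (s0 * 2 ^ j %/ r = (s0 * 2 ^ E %/ r) %/ 2 ^ (E - j))%N.
Proof.
move=> hr hj.
have -> : (2 ^ E = 2 ^ j * 2 ^ (E - j))%N by rewrite -expnD subnKC.
by rewrite -divnMA mulnA divnMr // expn_gt0.
Qed.

Ltac ar := repeat match goal with
  | H : context [bits_sub] |- _ => clear H
  | H : context [frac_bits] |- _ => clear H
  | H : context [divn] |- _ => clear H
  | H : context [modn] |- _ => clear H
  end; lia.

Theorem proposition4 (L k r p u mu mu' s0 : nat) :
  (1 <= L)%N -> (2 <= k)%N -> (k %| L)%N -> (0 < r)%N -> (0 < p)%N ->
  (1 <= u)%N -> (u <= k - 1)%N ->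
  (mu < 2 ^ (lpos L k u.+1 + 2 - lpos L k u))%N ->
  (mu' < 2 ^ (2 * L + p + 2 - lpos L k u.+1))%N ->
  (s0 < r)%N ->
  `| (mu'%:Z - (frac_bits s0 r (lpos L k u.+1) (2 * L + 1 + p))%:Z) | < (2 ^ p)%:Z ->
  bits_sub (2 * L + p + 2 - lpos L k u.+1) mu' 1 2
    = frac_bits s0 r (lpos L k u.+1) (lpos L k u.+1 + 1) ->
  (dist_t (lpos L k u.+1 + 2 - lpos L k u) mu
          (frac_bits s0 r (lpos L k u) (lpos L k u.+1 + 1)) <= 1)%N ->
  (exists c : int, c \in [:: -1; 0; 1] /\
     ((mu %% 4)%:Z + c = (bits_sub (2 * L + p + 2 - lpos L k u.+1) mu' 1 2)%:Z %[mod 4])%Z)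
  /\
  (forall c : int, c \in [:: -1; 0; 1] ->
     ((mu %% 4)%:Z + c = (bits_sub (2 * L + p + 2 - lpos L k u.+1) mu' 1 2)%:Z %[mod 4])%Z ->
     let N := (2 * L + p + 2 - lpos L k u.+1)%N in
     let len := (lpos L k u.+1 + 2 - lpos L k u)%N in
     let prefix : nat := `| ((mu%:Z + c) %% (2 ^ len)%:Z)%Z |%N in
     let mu'u : nat := concat_bits prefix (bits_sub N mu' 3 N) (N - 2) in
     `| (mu'u%:Z - (frac_bits s0 r (lpos L k u) (2 * L + 1 + p))%:Z) | < (2 ^ p)%:Z /\
     bits_sub (2 * L + p + 2 - lpos L k u) mu'u 1 2
       = frac_bits s0 r (lpos L k u) (lpos L k u + 1)).
Proof.
move=> hL hk hkL hr hp hu1 huk hmu hmu' hs0 hd htop hdist.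
set m := (L %/ k)%N.
have hmk : (m * k = L)%N by rewrite divnK.
have hm1 : (1 <= m)%N.
  rewrite divn_gt0; last by lia.
  by apply: dvdn_leq; lia.
have ea : lpos L k u = ((u - 1) * m + 1)%N.
  rewrite /lpos ifF //; apply/eqP; lia.
have eb : lpos L k u.+1 = (u * m + 1)%N.
  rewrite /lpos ifF /=; first by rewrite subn1.
  apply/eqP; lia.
have hbL : (u * m + 1 <= L)%N.
  have h1 : (u * m <= (k - 1) * m)%N by rewrite leq_mul2r huk orbT.
  rewrite mulnBl mul1n [(k * m)%N]mulnC hmk in h1. lia.
move: hmu hmu' hd htop hdist; rewrite ea eb.
set a := ((u - 1) * m + 1)%N. set b := (u * m + 1)%N.
have hab : (b = a + m)%N.
  rewrite /a /b. have -> : u = ((u - 1) + 1)%N by lia. rewrite mulnDl. lia.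
clear ea eb hmk hkL hk huk hu1.
have hbL2 : (b <= L)%N by move: hbL; rewrite /b; lia.
have ha1 : (1 <= a)%N by rewrite /a addn1.
clear hbL. clearbody a b.
set E := (2 * L + 1 + p)%N.
set n := (2 * L + p - b)%N.
set X := (s0 * 2 ^ E %/ r)%N.
have hE : E = (2 * L + 1 + p)%N by [].
have hn : n = (2 * L + p - b)%N by [].
have hX : X = (s0 * 2 ^ E %/ r)%N by [].
clearbody X n E m.
have hbE : (b + 1 <= E)%N by lia.
have hb1 : bits_sub (2 * L + p + 2 - b) mu' 1 2 = (mu' %/ 2 ^ n %% 4)%N.
  rewrite /bits_sub. have -> : (2 * L + p + 2 - b - 2 = n)%N by ar. by [].
have hba : forall x, bits_sub (2 * L + p + 2 - a) x 1 2 = (x %/ 2 ^ (m + n) %% 4)%N.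
  move=> x; rewrite /bits_sub. have -> : (2 * L + p + 2 - a - 2 = m + n)%N by ar. by [].
have hb3 : bits_sub (2 * L + p + 2 - b) mu' 3 (2 * L + p + 2 - b) = (mu' %% 2 ^ n)%N.
  rewrite /bits_sub subnn expn0 divn1. congr (_ %% 2 ^ _)%N. ar.
have hf1 : frac_bits s0 r b E = (X %% 2 ^ (n + 2))%N.
  rewrite /frac_bits -hX. congr (_ %% 2 ^ _)%N. ar.
have hf2 : frac_bits s0 r b (b + 1) = (X %/ 2 ^ n %% 4)%N.
  rewrite /frac_bits (@Fshift s0 r (b + 1) E) // -hX.
  have -> : (E - (b + 1) = n)%N by ar.
  have -> : (b + 1 - b + 1 = 2)%N by ar. by [].
have hf3 : frac_bits s0 r a (b + 1) = (X %/ 2 ^ n %% 2 ^ (m + 2))%N.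
  rewrite /frac_bits (@Fshift s0 r (b + 1) E) // -hX.
  have -> : (E - (b + 1) = n)%N by ar.
  have -> : (b + 1 - a + 1 = m + 2)%N by ar. by [].
have hf4 : frac_bits s0 r a E = (X %% 2 ^ (m + n + 2))%N.
  rewrite /frac_bits -hX. congr (_ %% 2 ^ _)%N. ar.
have hf5 : frac_bits s0 r a (a + 1) = (X %/ 2 ^ (n + m) %% 4)%N.
  have hae : (a + 1 <= E)%N by ar.
  rewrite /frac_bits (@Fshift s0 r (a + 1) E hr hae) -hX.
  have -> : (E - (a + 1) = n + m)%N by ar.
  have -> : (a + 1 - a + 1 = 2)%N by ar. by [].
have hlen : (b + 2 - a = m + 2)%N by ar.
have hN : (2 * L + p + 2 - b = n + 2)%N by ar.
move=> hmu hmu' hd htop hdist.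
rewrite hf1 in hd. rewrite hb1 hf2 in htop. rewrite /dist_t hlen hf3 in hdist.
rewrite hlen in hmu. rewrite hN in hmu'.
have [P1 P2] := @pure m n p X mu mu' hmu hmu' hd htop hdist.
split; first by rewrite hb1.
move=> c hc hcong. rewrite hb1 in hcong. have [G1 G2] := P2 c hc hcong.
move=> N len prefix mu'u.
rewrite /mu'u /prefix /len /N hb3 hlen hN /concat_bits addnK hf4 hba hf5.
by split.
Qed.
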